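(* Let $(X,d)$ be a complete metric space and let $f:\ell_\infty(X)\to X$ satisfy $L_{s,q}(f)<1$ for some $q\in(0,1)$; let $x_*$ be the generalized contractive fixed point of $f$. Fix $x\in X$ and for $n\in\mathbb{N}$ define $f_n:X^n\to X$ by $f_n(x_0,\dots,x_{n-1}):=f(x_0,\dots,x_{n-1},x,x,\dots)$. Then for every $n\in\mathbb{N}$, the Lipschitz constant of $f_n$ with respect to the maximum metric $d_n((x_0,\dots,x_{n-1}),(y_0,\dots,y_{n-1}))=\max_{i<n}d(x_i,y_i)$ on $X^n$ satisfies $\mathrm{Lip}(f_n)\le L_{s,q}(f)$; consequently $f_n$ has a unique point $x_*^n\in X$ with $f_n(x_*^n,\dots,x_*^n)=x_*^n$, and $$d(x_*^n,x_* )\le q^n\frac{L_{s,q}(f)}{1-L_{s,q}(f)}\,d(x_*,x).$$ In particular $x_*^n\to x_*$.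
   Context: $\mathbb{N}^*=\{0,1,2,\dots\}$; $\ell_\infty(X)$ is the set of all bounded sequences $(x_n)_{n\in\mathbb{N}^*}$ in $X$. For $q\in(0,1)$, $d_{s,q}(x,y):=\sup\{q^n d(x_n,y_n):n\in\mathbb{N}^*\}$ and $L_{s,q}(f)$ is the Lipschitz constant of $f$ with respect to $d_{s,q}$ on $\ell_\infty(X)$ and $d$ on $X$. A point $x_*\in X$ is a generalized fixed point of $f$ if $f(x_*,x_*,\dots)=x_*$; a generalized contractive fixed point is one to which, for every starting $x\in\ell_\infty(X)$, the generalized iterates $x^k:=f(\tilde x^{k-1})$, $\tilde x^k:=(f(\tilde x^{k-1}),\tilde x^{k-1}_0,\tilde x^{k-1}_1,\dots)$, $\tilde x^0:=x$, converge (under the hypothesis it exists and is unique). *)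

(* Defs.v *)
From Stdlib Require Import Reals Lra Lia Classical ClassicalEpsilon.
Open Scope R_scope.

Definition is_metric {X : Type} (d : X -> X -> R) : Prop :=
  (forall x y, 0 <= d x y) /\
  (forall x y, d x y = 0 <-> x = y) /\
  (forall x y, d x y = d y x) /\
  (forall x y z, d x z <= d x y + d y z).

Definition cauchy_seq {X : Type} (d : X -> X -> R) (u : nat -> X) : Prop :=
  forall eps, 0 < eps -> exists N, forall m n, (N <= m)%nat -> (N <= n)%nat ->
    d (u m) (u n) < eps.

Definition converges_to {X : Type} (d : X -> X -> R) (u : nat -> X) (l : X) : Prop :=
  forall eps, 0 < eps -> exists N, forall n, (N <= n)%nat -> d (u n) l < eps.

Definition complete {X : Type} (d : X -> X -> R) : Prop :=
  forall u, cauchy_seq d u -> exists l, converges_to d u l.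

(* membership in ell_infinity(X): bounded sequences *)
Definition bounded_seq {X : Type} (d : X -> X -> R) (x : nat -> X) : Prop :=
  exists M, forall n m, d (x n) (x m) <= M.

(* supremum of a set of reals (0 if the set is empty or unbounded) *)
Definition Rsup (E : R -> Prop) : R :=
  match excluded_middle_informative (bound E /\ exists r, E r) with
  | left H => proj1_sig (completeness E (proj1 H) (proj2 H))
  | right _ => 0
  end.

Definition dsq {X : Type} (d : X -> X -> R) (q : R) (x y : nat -> X) : R :=
  Rsup (fun r => exists n, r = q ^ n * d (x n) (y n)).

Definition lipschitz_with {A B : Type} (P : A -> Prop) (dA : A -> A -> R)
  (dB : B -> B -> R) (g : A -> B) (K : R) : Prop :=
  0 <= K /\ forall a b, P a -> P b -> dB (g a) (g b) <= K * dA a b.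

Definition is_lip_const {A B : Type} (P : A -> Prop) (dA : A -> A -> R)
  (dB : B -> B -> R) (g : A -> B) (L : R) : Prop :=
  lipschitz_with P dA dB g L /\
  forall K, lipschitz_with P dA dB g K -> L <= K.

(* L_{s,q}(f), for f : ell_infinity(X) -> X (values of f outside ell_infinity
   are irrelevant) *)
Definition is_Lsq {X : Type} (d : X -> X -> R) (q : R) (f : (nat -> X) -> X)
  (L : R) : Prop :=
  is_lip_const (bounded_seq d) (dsq d q) d f L.

Definition scons {X : Type} (a : X) (x : nat -> X) : nat -> X :=
  fun n => match n with O => a | S k => x k end.

Fixpoint gen_tilde {X : Type} (f : (nat -> X) -> X) (x : nat -> X) (k : nat)
  : nat -> X :=
  match k with
  | O => x
  | S k' => scons (f (gen_tilde f x k')) (gen_tilde f x k')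
  end.

(* x^k := f(tilde x^{k-1}), k >= 1; indexed here by k' = k-1 *)
Definition gen_iter {X : Type} (f : (nat -> X) -> X) (x : nat -> X) (k : nat) : X :=
  f (gen_tilde f x k).

Definition gen_fixed_point {X : Type} (f : (nat -> X) -> X) (xs : X) : Prop :=
  f (fun _ => xs) = xs.

Definition gen_contractive_fixed_point {X : Type} (d : X -> X -> R)
  (f : (nat -> X) -> X) (xs : X) : Prop :=
  gen_fixed_point f xs /\
  forall x, bounded_seq d x -> converges_to d (gen_iter f x) xs.

(* Points of X^n are represented by sequences v : nat -> X of which only the
   entries v 0, ..., v (n-1) matter. *)
Definition fn {X : Type} (f : (nat -> X) -> X) (x : X) (n : nat)
  (v : nat -> X) : X :=
  f (fun i => if Nat.ltb i n then v i else x).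

Fixpoint dmax {X : Type} (d : X -> X -> R) (n : nat) (v w : nat -> X) : R :=
  match n with
  | O => 0
  | S k => Rmax (dmax d k v w) (d (v k) (w k))
  end.

(* Main.v *)
Require Import Defs.
From Stdlib Require Import Reals Lra Lia Classical ClassicalEpsilon.
Open Scope R_scope.

Lemma pow_le1 (q : R) (k : nat) : 0 <= q <= 1 -> q ^ k <= 1.
Proof. intros H. rewrite <- (pow1 k). apply pow_incr. lra. Qed.

Lemma pow_mono_dec (q : R) (n i : nat) : 0 <= q <= 1 -> (n <= i)%nat -> q ^ i <= q ^ n.
Proof.
  intros H Hi. replace i with (n + (i - n))%nat by lia. rewrite pow_add.
  pose proof (pow_le1 q (i - n) H). pose proof (pow_le q n (proj1 H)). nra.
Qed.

Lemma Rsup_le (E : R -> Prop) (M : R) : (exists r, E r) -> (forall r, E r -> r <= M) -> Rsup E <= M.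
Proof.
  intros Hne Hb. unfold Rsup. destruct excluded_middle_informative as [H|H].
  - destruct (completeness E _ _) as [m [Hub Hlub]]. simpl. apply Hlub. intros r Hr. auto.
  - exfalso. apply H. split; [exists M; intros r Hr; auto | exact Hne].
Qed.

Lemma dsq_le {X : Type} (d : X -> X -> R) q s t M :
  (forall i, q ^ i * d (s i) (t i) <= M) -> dsq d q s t <= M.
Proof.
  intros H. unfold dsq. apply Rsup_le.
  - exists (q ^ 0 * d (s 0%nat) (t 0%nat)). exists 0%nat. reflexivity.
  - intros r [i ->]. apply H.
Qed.

Lemma dmax_ge {X : Type} (d : X -> X -> R) n v w i : (i < n)%nat -> d (v i) (w i) <= dmax d n v w.
Proof.
  induction n; intros Hi; simpl. lia.
  destruct (Nat.eq_dec i n) as [->|Hne]. apply Rmax_r.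
  eapply Rle_trans; [apply IHn; lia | apply Rmax_l].
Qed.


Lemma dmax_nn {X : Type} (d : X -> X -> R) n v w : 0 <= dmax d n v w.
Proof.
  induction n; simpl. lra. eapply Rle_trans; [exact IHn | apply Rmax_l].
Qed.

Lemma dmax_const {X : Type} (d : X -> X -> R) n a b : 0 <= d a b -> dmax d (S n) (fun _ => a) (fun _ => b) = d a b.
Proof.
  intros H0. induction n. simpl. unfold Rmax. destruct Rle_dec; lra.
  change (Rmax (dmax d (S n) (fun _ => a) (fun _ => b)) (d a b) = d a b).
  rewrite IHn. unfold Rmax. destruct Rle_dec; auto.
Qed.

Lemma glb_exists (P : R -> Prop) (L0 : R) : P L0 -> (forall K, P K -> 0 <= K) ->
  exists m, (forall K, P K -> m <= K) /\ (forall m', (forall K, P K -> m' <= K) -> m' <= m).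
Proof.
  intros HP Hlow.
  assert (Hb : bound (fun r => P (- r))).
  { exists 0. intros r Hr. specialize (Hlow _ Hr). lra. }
  assert (Hne : exists r, P (- r)).
  { exists (- L0). rewrite Ropp_involutive. exact HP. }
  destruct (completeness _ Hb Hne) as [M [Hub Hlub]].
  exists (- M). split.
  - intros K HK. assert (- K <= M). { apply Hub. rewrite Ropp_involutive. exact HK. } lra.
  - intros m' Hm'. assert (M <= - m'). { apply Hlub. intros r Hr. specialize (Hm' _ Hr). lra. } lra.
Qed.

Lemma metric_eq0 {X : Type} (d : X -> X -> R) (Hmet : is_metric d) a b :
  (forall eps, 0 < eps -> d a b < eps) -> a = b.
Proof.
  intros H. destruct Hmet as [Hnn [Hz _]]. apply Hz.
  destruct (Rle_lt_dec (d a b) 0). specialize (Hnn a b). lra.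
  specialize (H _ r). lra.
Qed.

Lemma banach {X : Type} (d : X -> X -> R) (Hmet : is_metric d) (Hcomp : complete d)
  (g : X -> X) (L : R) (HL0 : 0 <= L) (HL1 : L < 1)
  (Hg : forall a b, d (g a) (g b) <= L * d a b) (x0 : X) : exists y, g y = y.
Proof.
  pose proof Hmet as [Hnn [Hz [Hs Ht]]].
  set (u := fun k => Nat.iter k g x0).
  set (D := d (u 0%nat) (u 1%nat)).
  assert (HD : 0 <= D) by apply Hnn.
  assert (HB : forall p, d (u 0%nat) (u p) <= D / (1 - L)).
  { induction p.
    - simpl. replace (d x0 x0) with 0 by (symmetry; apply Hz; reflexivity).
      unfold Rdiv; apply Rmult_le_pos; [lra| left; apply Rinv_0_lt_compat; lra].
    - eapply Rle_trans. apply (Ht _ (u 1%nat)).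
      assert (d (u 1%nat) (u (S p))  <= L * d (u 0%nat) (u p)) by apply Hg.
      apply Rle_trans with (D + L * (D / (1 - L))).
      + fold D. nra.
      + right. field. lra. }
  assert (HC : forall m p, d (u m) (u (m + p)%nat) <= L ^ m * (D / (1 - L))).
  { induction m; intros p.
    - simpl. rewrite Rmult_1_l. apply HB.
    - simpl. eapply Rle_trans. apply Hg. specialize (IHm p). nra. }
  assert (Hcauchy : cauchy_seq d u).
  { intros eps Heps.
    assert (Hy : 0 < eps * (1 - L) / (D + 1)).
    { apply Rdiv_lt_0_compat; [apply Rmult_lt_0_compat|]; lra. }
    destruct (pow_lt_1_zero L ltac:(rewrite Rabs_pos_eq; lra) _ Hy) as [N HN].
    exists N. intros m n Hm Hn.
    assert (Hgen : forall m n, (N <= m)%nat -> (m <= n)%nat -> d (u m) (u n) < eps).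
    { intros m' n' Hm' Hmn. replace n' with (m' + (n' - m'))%nat by lia.
      eapply Rle_lt_trans. apply HC.
      specialize (HN m' Hm'). rewrite Rabs_pos_eq in HN by (apply pow_le; lra).
      pose proof (pow_le L m' HL0).
      apply Rle_lt_trans with (L ^ m' * ((D + 1) / (1 - L))).
      - apply Rmult_le_compat_l; auto. unfold Rdiv. apply Rmult_le_compat_r.
        left; apply Rinv_0_lt_compat; lra. lra.
      - apply Rlt_le_trans with (eps * (1 - L) / (D + 1) * ((D + 1) / (1 - L))).
        + apply Rmult_lt_compat_r; auto. apply Rdiv_lt_0_compat; lra.
        + right. field. lra. }
    destruct (Nat.le_gt_cases m n). apply Hgen; auto. rewrite Hs. apply Hgen; lia. }
  destruct (Hcomp u Hcauchy) as [l Hl].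
  exists l. apply (metric_eq0 d Hmet). intros eps Heps.
  destruct (Hl (eps / 2) ltac:(lra)) as [N HN].
  pose proof (HN N (le_n _)). pose proof (HN (S N) (le_S _ _ (le_n _))).
  eapply Rle_lt_trans. apply (Ht _ (u (S N))).
  assert (d (g l) (u (S N)) <= L * d l (u N)) by (apply Hg).
  rewrite (Hs l) in H1. pose proof (Hnn (u N) l). nra.
Qed.

Theorem mainTheorem15 (X : Type) (d : X -> X -> R)
  (Hmet : is_metric d) (Hcomp : complete d)
  (f : (nat -> X) -> X) (q L : R) (Hq0 : 0 < q) (Hq1 : q < 1)
  (HL : is_Lsq d q f L) (HL1 : L < 1)
  (xstar : X) (Hxstar : gen_contractive_fixed_point d f xstar)
  (x : X) :
  (forall n : nat, (1 <= n)%nat ->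
     (exists Ln, is_lip_const (fun _ => True) (dmax d n) d (fn f x n) Ln /\ Ln <= L) /\
     (exists! y, fn f x n (fun _ => y) = y) /\
     (forall y, fn f x n (fun _ => y) = y ->
        d y xstar <= q ^ n * (L / (1 - L)) * d xstar x)) /\
  (forall xs : nat -> X,
     (forall n, (1 <= n)%nat -> fn f x n (fun _ => xs n) = xs n) ->
     converges_to d xs xstar).
Proof.
  pose proof Hmet as [Hnn [Hz [Hs Ht]]].
  destruct HL as [[HL0 Hlip] _].
  destruct Hxstar as [Hfix _]. unfold gen_fixed_point in Hfix.
  assert (Hxx : forall a, d a a = 0) by (intros; apply Hz; reflexivity).
  assert (Hq : 0 <= q <= 1) by lra.
  assert (Hbd : forall n v, bounded_seq d (fun i => if Nat.ltb i n then v i else x)).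
  { intros n v. exists (2 * dmax d n v (fun _ => x)).
    assert (Hp : forall a, d ((fun i => if Nat.ltb i n then v i else x) a) x <= dmax d n v (fun _ => x)).
    { intros a. simpl. destruct (Nat.ltb a n) eqn:E.
      - apply Nat.ltb_lt in E. apply (dmax_ge d n v (fun _ => x) a E).
      - rewrite Hxx. apply dmax_nn. }
    intros a b. eapply Rle_trans. apply (Ht _ x). rewrite (Hs x). pose proof (Hp a). pose proof (Hp b). lra. }
  assert (Hlipn : forall n v w, d (fn f x n v) (fn f x n w) <= L * dmax d n v w).
  { intros n v w. unfold fn. eapply Rle_trans. apply Hlip; apply Hbd.
    apply Rmult_le_compat_l; auto. apply dsq_le. intros i.
    destruct (Nat.ltb i n) eqn:E.
    - apply Nat.ltb_lt in E. pose proof (dmax_ge d n v w i E).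
      pose proof (pow_le1 q i Hq). pose proof (pow_le q i (proj1 Hq)). pose proof (Hnn (v i) (w i)). nra.
    - rewrite Hxx, Rmult_0_r. apply dmax_nn. }
  assert (Hbound : forall n, (1 <= n)%nat -> forall y, fn f x n (fun _ => y) = y ->
        d y xstar <= q ^ n * (L / (1 - L)) * d xstar x).
  { intros n Hn y Hy.
    assert (H1 : d y xstar <= L * Rmax (d y xstar) (q ^ n * d x xstar)).
    { replace (d y xstar) with (d (fn f x n (fun _ => y)) (f (fun _ => xstar))) at 1 by (rewrite Hy, Hfix; reflexivity). unfold fn.
      eapply Rle_trans. apply Hlip. apply Hbd. exists 0. intros; rewrite Hxx; lra.
      apply Rmult_le_compat_l; auto. apply dsq_le. intros i.
      destruct (Nat.ltb i n) eqn:E.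
      - pose proof (pow_le1 q i Hq). pose proof (pow_le q i (proj1 Hq)). pose proof (Hnn y xstar).
        eapply Rle_trans; [|apply Rmax_l]. nra.
      - apply Nat.ltb_ge in E. pose proof (pow_mono_dec q n i Hq E). pose proof (Hnn x xstar).
        eapply Rle_trans; [|apply Rmax_r]. nra. }
    pose proof (Hnn y xstar). pose proof (Hnn x xstar). pose proof (pow_le q n (proj1 Hq)).
    assert (HLL : L <= L / (1 - L)).
    { apply Rmult_le_reg_r with (1 - L). lra. unfold Rdiv. rewrite Rmult_assoc, Rinv_l by lra. nra. }
    rewrite (Hs xstar x).
    unfold Rmax in H1. destruct (Rle_dec (d y xstar) (q ^ n * d x xstar)).
    - eapply Rle_trans. exact H1. assert (0 <= q ^ n * d x xstar) by nra. nra.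
    - assert (Hy0 : d y xstar = 0) by nra. rewrite Hy0.
      apply Rmult_le_pos; auto. apply Rmult_le_pos; auto. lra. }
  split.
  - intros n Hn. split; [|split].
    + set (P := lipschitz_with (fun _ : nat -> X => True) (dmax d n) d (fn f x n)).
      assert (HPL : P L) by (split; auto).
      destruct (glb_exists P L HPL) as [m [Hm1 Hm2]]. { intros K [HK _]; auto. }
      exists m. split; [split|].
      * split. apply Hm2. intros K [HK _]; auto.
        intros a b _ _. destruct (Rle_lt_dec (dmax d n a b) 0) as [H0|H0].
        -- pose proof (dmax_nn d n a b). assert (Hd0 : dmax d n a b = 0) by lra. rewrite Hd0.
           pose proof (Hlipn n a b) as H3. rewrite Hd0 in H3. pose proof (Hnn (fn f x n a) (fn f x n b)). nra.
        -- assert (d (fn f x n a) (fn f x n b) / dmax d n a b <= m).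
           { apply Hm2. intros K [_ HK]. specialize (HK a b I I).
             apply Rmult_le_reg_r with (dmax d n a b). auto.
             unfold Rdiv. rewrite Rmult_assoc, Rinv_l by lra. lra. }
           apply Rmult_le_reg_r with (/ dmax d n a b). apply Rinv_0_lt_compat; auto.
           rewrite Rmult_assoc, Rinv_r by lra. lra.
      * exact Hm1.
      * apply Hm1. exact HPL.
    + assert (Hg : forall a b, d (fn f x n (fun _ => a)) (fn f x n (fun _ => b)) <= L * d a b).
      { intros a b. rewrite <- (dmax_const d (n - 1) a b) by apply Hnn.
        replace (S (n - 1)) with n by lia. apply Hlipn. }
      destruct (banach d Hmet Hcomp _ L HL0 HL1 Hg x) as [y Hy].
      exists y. split; auto. intros y' Hy'.
      apply Hz. pose proof (Hg y y') as H. rewrite Hy, Hy' in H. pose proof (Hnn y y'). nra.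
    + apply Hbound; auto.
  - intros xs Hxs eps Heps.
    set (C := L / (1 - L) * d xstar x).
    assert (HC : 0 <= C).
    { unfold C. apply Rmult_le_pos; auto. unfold Rdiv. apply Rmult_le_pos; auto.
      left; apply Rinv_0_lt_compat; lra. }
    assert (Hy : 0 < eps / (C + 1)) by (apply Rdiv_lt_0_compat; lra).
    destruct (pow_lt_1_zero q ltac:(rewrite Rabs_pos_eq; lra) _ Hy) as [N HN].
    exists (Nat.max N 1). intros n Hn.
    assert (Hn1 : (1 <= n)%nat) by lia.
    eapply Rle_lt_trans. apply (Hbound n Hn1). apply Hxs. exact Hn1.
    specialize (HN n ltac:(lia)). rewrite Rabs_pos_eq in HN by (apply pow_le; lra).
    rewrite Rmult_assoc. fold C.
    apply Rle_lt_trans with (q ^ n * (C + 1)). pose proof (pow_le q n (proj1 Hq)). nra.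
    apply Rlt_le_trans with (eps / (C + 1) * (C + 1)). apply Rmult_lt_compat_r; lra.
    right. field. lra.
Qed.
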